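(* With the setup in the context, suppose $Q>2m$. Let $\varphi_1,\varphi_2$ be unit-norm eigenvectors of $H$ for its two largest eigenvalues $\lambda_1>\lambda_2$, with signs chosen so that $\varphi_1(v_1)\ge0$ and $\varphi_2(v_1)\ge0$. Then $$\varphi_1(v_1)\ \ge\ \sqrt{\tfrac12-\tfrac{m}{2Q^2}}-\sqrt{\tfrac{m}{Q-m}},\qquad \varphi_2(v_1)\ \ge\ \sqrt{\tfrac12-\tfrac{m}{2Q^2}}-\sqrt{\tfrac{m+1}{Q-m-1}}.$$
   Context: $G$ is a finite, simple, connected graph with vertex set $V$, maximum degree $m$, and an involution $\sigma$ (a bijection $V\to V$ with $\sigma\circ\sigma=\mathrm{id}$ such that $x\sim y$ implies $\sigma(x)\sim\sigma(y)$). Fix $v_1\in V$ with $v_1':=\sigma(v_1)\ne v_1$, and let $H=A_G+D_Q$ be the adjacency matrix of $G$ plus the diagonal potential matrix, with potential $Q$ at $v_1$ and $v_1'$ and $0$ elsewhere. For an eigenvector $\varphi$, $\varphi(x)$ denotes its entry at vertex $x$. *)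

(* Defs.v *)
From HB Require Import structures.
From mathcomp Require Import all_boot all_order all_algebra.
From mathcomp Require Import reals.
Set Implicit Arguments. Unset Strict Implicit. Unset Printing Implicit Defensive.
Import Order.TTheory GRing.Theory Num.Theory.
Local Open Scope ring_scope.

Definition simple_graph (V : finType) (adj : rel V) : Prop :=
  symmetric adj /\ irreflexive adj.

Definition connected_graph (V : finType) (adj : rel V) : Prop :=
  forall x y : V, connect adj x y.

Definition degree (V : finType) (adj : rel V) (x : V) : nat :=
  #|[set y | adj x y]|.

Definition max_degree (V : finType) (adj : rel V) : nat :=
  (\max_(x : V) degree adj x)%N.

Definition graph_involution (V : finType) (adj : rel V) (sigma : V -> V) : Prop :=
  involutive sigma /\ (forall x y, adj x y -> adj (sigma x) (sigma y)).

(* The operator H = A_G + D_Q acting on vectors phi : V -> R, where the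
   potential is Q at v1 and at v1' = sigma v1, and 0 elsewhere. *)
Definition potential (R : realType) (V : finType) (sigma : V -> V) (v1 : V)
  (Q : R) (x : V) : R :=
  if (x == v1) || (x == sigma v1) then Q else 0.

Definition Hop (R : realType) (V : finType) (adj : rel V) (sigma : V -> V)
  (v1 : V) (Q : R) (phi : V -> R) (x : V) : R :=
  \sum_(y | adj x y) phi y + potential sigma v1 Q x * phi x.

Definition is_eigenvalue (R : realType) (V : finType) (adj : rel V)
  (sigma : V -> V) (v1 : V) (Q : R) (lambda : R) : Prop :=
  exists phi : V -> R, (exists x, phi x != 0) /\
    forall x, Hop adj sigma v1 Q phi x = lambda * phi x.

Definition is_eigenvector (R : realType) (V : finType) (adj : rel V)
  (sigma : V -> V) (v1 : V) (Q : R) (lambda : R) (phi : V -> R) : Prop :=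
  (exists x, phi x != 0) /\ forall x, Hop adj sigma v1 Q phi x = lambda * phi x.

Definition unit_norm (R : realType) (V : finType) (phi : V -> R) : Prop :=
  \sum_(x : V) phi x ^+ 2 = 1.

(* Main.v *)
Require Import Defs.
From HB Require Import structures.
From mathcomp Require Import all_boot all_order all_algebra.
From mathcomp Require Import reals.
From mathcomp Require Import all_classical all_analysis.
From mathcomp Require Import ring lra.
Import Order.TTheory GRing.Theory Num.Theory.
Local Open Scope ring_scope.

Module Helpers.
Set Implicit Arguments. Unset Strict Implicit. Unset Printing Implicit Defensive.
Import numFieldNormedType.Exports.
Local Open Scope classical_set_scope.
Local Open Scope ring_scope.

Lemma cont_sum (R : realType) (T : topologicalType) (I : Type) (s : seq I) (P : pred I)
  (F : I -> T -> R) : (forall i, continuous (F i)) ->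
  continuous (fun v => \sum_(i <- s | P i) F i v).
Proof.
move=> cF; elim: s => [|i s IH].
  under eq_fun do rewrite big_nil. exact: cst_continuous.
under eq_fun do rewrite big_cons.
case: (P i).
  move=> x; apply: (@continuousD _ _ _ (F i) (fun v => \sum_(j <- s | P j) F j v)).
  exact: cF. exact: IH.
exact: IH.
Qed.

Lemma cont_mul (R : realType) (T : topologicalType) (f g : T -> R) :
  continuous f -> continuous g -> continuous (fun v => f v * g v).
Proof. move=> cf cg x; exact: (continuousM (cf x) (cg x)). Qed.


Definition fv (R : realType) (V : finType) (v : 'rV[R]_#|V|) : V -> R :=
  fun x => v ord0 (enum_rank x).

Lemma fv_cont (R : realType) (V : finType) (x : V) :
  continuous (fun v : 'rV[R]_#|V| => fv v x).
Proof. exact: coord_continuous. Qed.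

Lemma exists_max (R : realType) (V : finType) (F : (V -> R) -> R) (u : V -> R) :
  continuous (fun v : 'rV[R]_#|V| => F (fv v)) ->
  (exists z0, \sum_x z0 x ^+ 2 = 1 /\ \sum_x z0 x * u x = 0) ->
  exists y, \sum_x y x ^+2 = 1 /\ \sum_x y x * u x = 0 /\
    forall z, \sum_x z x ^+ 2 = 1 -> \sum_x z x * u x = 0 -> F z <= F y.
Proof.
move=> cF [z0 [z01 z0u]].
pose g1 := fun v : 'rV[R]_#|V| => \sum_x fv v x ^+ 2.
pose g2 := fun v : 'rV[R]_#|V| => \sum_x fv v x * u x.
have cg1 : continuous g1.
  have -> : g1 = fun v => \sum_x fv v x * fv v x.
    by apply: funext => v; apply: eq_bigr => x _; rewrite expr2.
  by apply: cont_sum => x; apply: cont_mul; exact: fv_cont.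
have cg2 : continuous g2.
  apply: cont_sum => x; apply: cont_mul; [exact: fv_cont|exact: cst_continuous].
pose A := g1 @^-1` [set 1] `&` g2 @^-1` [set 0].
have rowK : forall z : V -> R, fv (\row_i z (enum_val i)) = z.
  by move=> z; apply: funext => x; rewrite /fv mxE enum_rankK.
have clA : closed A.
  apply: closedI; apply: preimage_closed; try exact: closed_eq.
  by move=> ? _; apply: cg1. by move=> ? _; apply: cg2.
have cpA : compact A.
  apply: (subclosed_compact clA (@rV_compact _ _ (fun=> `[(-1 : R), 1]%classic) (fun _ => @segment_compact _ _ _))).
  move=> v [/= Hv _] i /=.
  rewrite in_itv /= -ler_norml.
  have : fv v (enum_val i) ^+ 2 <= 1.
    rewrite -Hv /g1 (bigD1 (enum_val i)) //= lerDl.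
    by apply: sumr_ge0 => *; apply: sqr_ge0.
  rewrite /fv enum_valK => h.
  by rewrite -(expr_le1 (n:=2)) // real_normK ?num_real.
have A0 : A !=set0.
  exists (\row_i z0 (enum_val i)); rewrite /A /g1 /g2 /= rowK; split => //.
have [c cA cmax] := EVT_max_rV A0 cpA (continuous_subspaceT cF).
move: cA; rewrite inE => -[/= c1 c2].
exists (fv c); split => //; split => // z z1 zu.
have := cmax (\row_i z (enum_val i)); rewrite rowK; apply.
by rewrite inE /A /g1 /g2 /= rowK.
Qed.


Section Main.
Context (R : realType) (V : finType) (adj : rel V) (sigma : V -> V) (v1 : V) (Q : R).
Context (adjS : symmetric adj) (adjI : irreflexive adj).

Local Notation H := (Hop adj sigma v1 Q).
Definition dot (f g : V -> R) := \sum_x f x * g x.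
Definition qf f := dot f (H f).
Local Notation pot := (potential sigma v1 Q).

Lemma dotC f g : dot f g = dot g f.
Proof. by apply: eq_bigr => x _; rewrite mulrC. Qed.

Lemma dotDl a b f g h : dot (fun x => a * f x + b * g x) h = a * dot f h + b * dot g h.
Proof. rewrite /dot !mulr_sumr -big_split; apply: eq_bigr => x _ /=; ring. Qed.

Lemma dotDr a b f g h : dot h (fun x => a * f x + b * g x) = a * dot h f + b * dot h g.
Proof. by rewrite dotC dotDl !(dotC h). Qed.

Lemma dotZl a f h : dot (fun x => a * f x) h = a * dot f h.
Proof. rewrite /dot !mulr_sumr; apply: eq_bigr => x _ /=; ring. Qed.

Lemma dotZr a f h : dot h (fun x => a * f x) = a * dot h f.
Proof. by rewrite dotC dotZl dotC. Qed.

Lemma HD a b f g x : H (fun x => a * f x + b * g x) x = a * H f x + b * H g x.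
Proof.
rewrite /Hop big_split /= -!mulr_sumr; ring.
Qed.

Lemma HZ a f x : H (fun x => a * f x) x = a * H f x.
Proof. rewrite /Hop -!mulr_sumr; ring. Qed.

Lemma dot_ge0 f : 0 <= dot f f.
Proof. by apply: sumr_ge0 => x _; rewrite -expr2 sqr_ge0. Qed.

Lemma dot_eq0 f : dot f f = 0 -> forall x, f x = 0.
Proof.
move=> /eqP; rewrite psumr_eq0; last by move=> x _; rewrite -expr2 sqr_ge0.
move=> /allP h x; have /implyP := h x (mem_index_enum x).
by move=> /(_ isT); rewrite mulf_eq0 orbb => /eqP.
Qed.

Lemma dot_gt0 f x : f x != 0 -> 0 < dot f f.
Proof.
move=> fx; rewrite lt_neqAle dot_ge0 andbT eq_sym; apply/negP => /eqP/dot_eq0/(_ x).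
by move/eqP: fx.
Qed.

Lemma dot_sym f g : dot f (H g) = dot (H f) g.
Proof.
have key : forall f g, dot f (H g) = \sum_x \sum_y (if adj x y then f x * g y else 0)
    + \sum_x pot x * f x * g x.
  move=> f' g'; rewrite /dot /Hop -big_split; apply: eq_bigr => x _ /=.
  rewrite mulrDr mulr_sumr big_mkcond /=; congr (_ + _); ring.
rewrite key dotC key; congr (_ + _).
  rewrite exchange_big; apply: eq_bigr => x _; apply: eq_bigr => y _.
  by rewrite adjS; case: ifP => //; rewrite mulrC.
by apply: eq_bigr => x _; ring.
Qed.


Lemma qfD a b f g : qf (fun x => a * f x + b * g x) =
  a ^+ 2 * qf f + 2 * a * b * dot f (H g) + b ^+ 2 * qf g.
Proof.
rewrite /qf (_ : dot _ (H _) = dot (fun x => a * f x + b * g x)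
   (fun x => a * H f x + b * H g x)); last by apply: eq_bigr => x _; rewrite HD.
rewrite dotDl !dotDr (dotC g (H f)) -dot_sym; ring.
Qed.

Lemma dotDD a b f g : dot (fun x => a * f x + b * g x) (fun x => a * f x + b * g x) =
  a ^+ 2 * dot f f + 2 * a * b * dot f g + b ^+ 2 * dot g g.
Proof. rewrite dotDl !dotDr (dotC g f); ring. Qed.

Lemma quad0 (b c : R) : 0 <= c -> (forall t, 0 <= 2 * t * b + t ^+ 2 * c) -> b = 0.
Proof.
move=> c0 h; have := h (- b / (c + 1)).
have c1 : 0 < c + 1 by lra.
set k := (c + 1)^-1.
have k0 : 0 < k by rewrite invr_gt0.
have kc : k * (c + 1) = 1 by rewrite mulVf // gt_eqF.
move=> h2.
have : b ^+ 2 * k * (2 - k * c) <= 0.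
  rewrite /k -mulrA; move: h2; rewrite /k; move: (c + 1)^-1 => kk h2; nra.
move=> h3.
have kc2 : 0 < 2 - k * c by nra.
have : b ^+ 2 <= 0.
  have p := mulr_gt0 k0 kc2.
  have h5 : b ^+ 2 * (k * (2 - k * c)) <= 0 by rewrite mulrA.
  by move: h5; rewrite mulrC pmulr_rle0.
by move=> h4; apply/eqP; rewrite -sqrf_eq0 eq_le h4 sqr_ge0.
Qed.

Definition ev (t : V) : V -> R := fun x => (x == t)%:R.

Lemma dot_ev t g : dot (ev t) g = g t.
Proof.
rewrite /dot (bigD1 t) //= /ev eqxx mul1r big1 ?addr0 // => x /negPf ->; by rewrite mul0r.
Qed.

Lemma max_eig (u y : V -> R) (lam mu : R) :
  (forall x, H u x = lam * u x) ->
  dot y u = 0 -> qf y = mu * dot y y ->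
  (forall z, dot z u = 0 -> qf z <= mu * dot z z) ->
  forall x, H y x = mu * y x.
Proof.
move=> Hu yu qy qmax.
pose B z := mu * dot z y - dot z (H y).
have Bw : forall w, dot w u = 0 -> B w = 0.
  move=> w wu.
  apply: (@quad0 _ (mu * dot w w - qf w)); first by rewrite subr_ge0 qmax.
  move=> t; have := qmax (fun x => 1 * y x + t * w x).
  rewrite dotDl yu wu !mulr0 addr0 => /(_ erefl).
  rewrite qfD dotDD qy /B (dotC w (H y)) -dot_sym (dotC w y) => h; lra.
move=> t.
pose c0 := if dot u u == 0 then 0 else u t / dot u u.
have w0 : dot (fun x => 1 * ev t x + (- c0) * u x) u = 0.
  rewrite dotDl dot_ev /c0; case: ifP => [/eqP uu | /negbT nz].
    by rewrite uu (dot_eq0 uu) mulr0 !mulr0 addr0.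
  rewrite mulNr divfK //; lra.
have := Bw _ w0; rewrite /B dotDl dotDl dot_ev dot_ev.
have -> : dot u (H y) = lam * dot u y.
  by rewrite dot_sym -dotZl; apply: eq_bigr => x _; rewrite Hu.
rewrite dotC yu => h; lra.
Qed.


Context (Q0 : 0 <= Q) (hconn : connected_graph adj).

Lemma pot_ge0 x : 0 <= pot x.
Proof. by rewrite /potential; case: ifP. Qed.

Lemma qf_eig f lam : (forall x, H f x = lam * f x) -> qf f = lam * dot f f.
Proof. by move=> h; rewrite /qf -dotZr; apply: eq_bigr => x _; rewrite h. Qed.

Lemma rayleigh mu lam phi x0 : (forall z, qf z <= mu * dot z z) ->
  (forall x, H phi x = lam * phi x) -> phi x0 != 0 -> lam <= mu.
Proof.
move=> qm hp nz; have := qm phi; rewrite (qf_eig hp).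
by rewrite ler_pM2r // (dot_gt0 nz).
Qed.

Lemma qf_abs f : qf f <= qf (fun x => `|f x|).
Proof.
apply: ler_sum => x _ /=; rewrite !mulrDr.
apply: lerD.
  apply: le_trans (ler_norm _) _; rewrite normrM ler_wpM2l ?normr_ge0 //.
  exact: ler_norm_sum.
rewrite mulrCA [X in _ <= X]mulrCA; apply: ler_wpM2l; first exact: pot_ge0.
by rewrite -normrM ger0_norm // -expr2 sqr_ge0.
Qed.


Lemma zero_prop z mu u0 : (forall x, 0 <= z x) -> (forall x, H z x = mu * z x) ->
  z u0 = 0 -> forall x, z x = 0.
Proof.
move=> zge hz zu0.
have step : forall u y, z u = 0 -> adj u y -> z y = 0.
  move=> u y zu auy; have := hz u; rewrite /Hop zu !mulr0 addr0 => hs.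
  exact: (psumr_eq0P (fun i _ => zge i) hs).
move=> x; move: (hconn u0 x) => /connectP [p pth ->].
elim: p u0 pth zu0 => [|y p IH] u //= /andP [auy pth] zu.
exact: (IH y pth (step u y zu auy)).
Qed.

Lemma dot_abs f : dot (fun x => `|f x|) (fun x => `|f x|) = dot f f.
Proof. by apply: eq_bigr => x _; rewrite -normrM ger0_norm // -expr2 sqr_ge0. Qed.

Lemma maxvec mu x t0 : (forall z, qf z <= mu * dot z z) ->
  (forall t, H x t = mu * x t) -> x t0 != 0 ->
  (forall t, H (fun t => `|x t|) t = mu * `|x t|) /\ forall u, x u != 0.
Proof.
move=> qm hx nz.
have qa : qf (fun t => `|x t|) = mu * dot (fun t => `|x t|) (fun t => `|x t|).
  apply/eqP; rewrite eq_le qm /= dot_abs -(qf_eig hx) qf_abs //.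
have ha : forall t, H (fun t => `|x t|) t = mu * `|x t|.
  apply: (@max_eig (fun _ => 0) (fun t => `|x t|) 0 mu).
  - by move=> t; rewrite /Hop big1 // mulr0 mul0r addr0.
  - by rewrite /dot big1 // => t _; rewrite mulr0.
  - exact: qa.
  - by move=> z _; apply: qm.
split => // u; apply/negP => /eqP xu.
have xu0 : `|x u| = 0 by rewrite xu normr0.
have := zero_prop (fun t => normr_ge0 (x t)) ha xu0 t0.
by move/eqP; rewrite normr_eq0 (negbTE nz).
Qed.

Lemma unique_vec mu x y t0 : (forall z, qf z <= mu * dot z z) ->
  (forall t, H x t = mu * x t) -> x t0 != 0 ->
  (forall t, H y t = mu * y t) -> forall t, y t = y t0 / x t0 * x t.
Proof.
move=> qm hx nz hy.
pose w := fun t => x t0 * y t + (- y t0) * x t.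
have hw : forall t, H w t = mu * w t.
  by move=> t; rewrite /w HD hx hy; ring.
have w0 : forall t, w t = 0.
  move=> t; apply/eqP; apply/negP => /negP wt.
  have [_ /(_ t0)] := maxvec qm hw wt.
  by rewrite /w mulrC mulNr subrr eqxx.
move=> t; have := w0 t; rewrite /w => h.
apply: (mulfI nz); rewrite mulrA mulrCA mulfV // mulr1; lra.
Qed.


Lemma CS (I : finType) (P : pred I) (f g : I -> R) :
  (\sum_(i | P i) f i * g i) ^+ 2 <=
  (\sum_(i | P i) f i ^+ 2) * (\sum_(i | P i) g i ^+ 2).
Proof.
set A := \sum_(i | P i) f i ^+ 2; set B := \sum_(i | P i) f i * g i.
set C := \sum_(i | P i) g i ^+ 2.
have e t : \sum_(i | P i) (f i - t * g i) ^+ 2 = A - 2 * t * B + t ^+ 2 * C.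
  rewrite /A /B /C !mulr_sumr -sumrB -big_split /=; apply: eq_bigr => i _; ring.
have pos t : 0 <= A - 2 * t * B + t ^+ 2 * C.
  by rewrite -e; apply: sumr_ge0 => i _; apply: sqr_ge0.
have C0 : 0 <= C by apply: sumr_ge0 => i _; apply: sqr_ge0.
have [Cz|Cp] := eqVneq C 0.
  have gz := psumr_eq0P (fun i _ => sqr_ge0 (g i)) Cz.
  have -> : B = 0.
    by rewrite /B big1 // => i Pi; move/eqP: (gz i Pi); rewrite sqrf_eq0 => /eqP ->; rewrite mulr0.
  by rewrite expr0n /= mulr_ge0 // sumr_ge0 // => i _; apply: sqr_ge0.
have Cg : 0 < C by rewrite lt_neqAle eq_sym Cp C0.
have := pos (B / C).
have -> : A - 2 * (B / C) * B + (B / C) ^+ 2 * C = A - B ^+ 2 / C.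
  by field.
rewrite subr_ge0 ler_pdivrMr // => h; by rewrite mulrC.
Qed.

Definition mdeg : R := (max_degree adj)%:R.

Lemma deg_sum x : \sum_(y | adj x y) (1 : R) = (degree adj x)%:R.
Proof. by rewrite sumr_const /degree cardsE. Qed.

Lemma deg_le x : (degree adj x)%:R <= mdeg.
Proof. by rewrite ler_nat /max_degree; apply: (leq_bigmax x). Qed.

Lemma m_ge0 : 0 <= mdeg.
Proof. by rewrite /mdeg ler0n. Qed.

Lemma Anorm f : \sum_x (\sum_(y | adj x y) f y) ^+ 2 <= mdeg ^+ 2 * \sum_x f x ^+ 2.
Proof.
apply: le_trans (_ : \sum_x mdeg * \sum_(y | adj x y) f y ^+ 2 <= _).
  apply: ler_sum => x _.
  have -> : \sum_(y | adj x y) f y = \sum_(y | adj x y) 1 * f y.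
    by apply: eq_bigr => y _; rewrite mul1r.
  apply: le_trans (CS _ _ _) _.
  under eq_bigr do rewrite expr1n.
  rewrite deg_sum; apply: ler_wpM2r; last exact: deg_le.
  by apply: sumr_ge0 => y _; apply: sqr_ge0.
rewrite -mulr_sumr expr2 -mulrA; apply: ler_wpM2l; first exact: m_ge0.
have -> : \sum_x \sum_(y | adj x y) f y ^+ 2 = \sum_y (degree adj y)%:R * f y ^+ 2.
  under eq_bigr do rewrite big_mkcond /=.
  rewrite exchange_big; apply: eq_bigr => y _.
  rewrite -deg_sum mulr_suml [RHS]big_mkcond /=; apply: eq_bigr => x _.
  by rewrite adjS; case: ifP => //; rewrite mul1r.
rewrite mulr_sumr; apply: ler_sum => y _; apply: ler_wpM2r; first exact: sqr_ge0.
exact: deg_le.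
Qed.


Context (hsv : sigma v1 != v1).
Definition inS (x : V) : bool := (x == v1) || (x == sigma v1).

Lemma split_sum (F : V -> R) : \sum_x F x = F v1 + F (sigma v1) + \sum_(x | ~~ inS x) F x.
Proof.
rewrite (bigID inS) /=; congr (_ + _).
rewrite (bigD1 v1) /inS ?eqxx //= (bigD1 (sigma v1)) /= ?eqxx ?orbT ?hsv //.
rewrite big1 ?addr0 ?addrA // => x /andP [/andP [/orP [->|->] h1] h2] //.
Qed.

Lemma pot_out x : ~~ inS x -> pot x = 0.
Proof. by rewrite /inS /potential => /negPf ->. Qed.

Lemma out_mass f lam : (forall x, H f x = lam * f x) ->
  lam ^+ 2 * \sum_(x | ~~ inS x) f x ^+ 2 <= mdeg ^+ 2 * \sum_x f x ^+ 2.
Proof.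
move=> hf; apply: le_trans (Anorm f).
rewrite mulr_sumr.
apply: le_trans (_ : \sum_(x | ~~ inS x) (\sum_(y | adj x y) f y) ^+ 2 <= _).
  apply: ler_sum => x xS; move: (hf x); rewrite /Hop pot_out // mul0r addr0 => ->.
  by rewrite exprMn.
rewrite [X in _ <= X](bigID inS) /= lerDr; apply: sumr_ge0 => x _; apply: sqr_ge0.
Qed.

Lemma sum_ind (P : pred V) c : \sum_(y | P y) ((y == c)%:R : R) = (P c)%:R.
Proof.
rewrite big_mkcond (bigD1 c) //= eqxx big1 ?addr0; first by case: (P c).
by move=> y /negPf ->; case: (P y).
Qed.

Lemma H_ev t x : H (ev t) x = (adj x t)%:R + pot x * (x == t)%:R.
Proof. by rewrite /Hop /ev sum_ind. Qed.

Lemma qf_ev t : qf (ev t) = pot t.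
Proof. by rewrite /qf dot_ev H_ev (adjI t) eqxx add0r mulr1. Qed.

Lemma pot_v1 : pot v1 = Q. Proof. by rewrite /potential eqxx. Qed.
Lemma pot_v1' : pot (sigma v1) = Q. Proof. by rewrite /potential eqxx orbT. Qed.

Definition dvec : V -> R := fun x => 1 * ev v1 x + (-1) * ev (sigma v1) x.

Lemma qf_dvec : 2 * Q - 2 <= qf dvec.
Proof.
rewrite /dvec qfD !qf_ev pot_v1 pot_v1' dot_ev H_ev.
rewrite /potential eqxx /= eq_sym (negbTE hsv) mulr0 addr0.
have : ((adj v1 (sigma v1))%:R : R) <= 1 by case: (adj _ _).
lra.
Qed.

Lemma dot_dvec f : dot dvec f = f v1 - f (sigma v1).
Proof. by rewrite /dvec dotDl !dot_ev; ring. Qed.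


Context (hinv : involutive sigma) (hhom : forall x y, adj x y -> adj (sigma x) (sigma y)).

Lemma adj_sig x y : adj (sigma x) (sigma y) = adj x y.
Proof.
apply/idP/idP; last exact: hhom.
by move=> /hhom; rewrite !hinv.
Qed.

Lemma pot_sig x : pot (sigma x) = pot x.
Proof.
rewrite /potential (inj_eq (inv_inj hinv)) -{1}(hinv v1) (inj_eq (inv_inj hinv)).
by rewrite orbC.
Qed.

Lemma H_sig f x : H (fun y => f (sigma y)) x = H f (sigma x).
Proof.
rewrite /Hop pot_sig; congr (_ + _).
rewrite [RHS](reindex_inj (inv_inj hinv)) /=.
by apply: eq_bigl => y; rewrite adj_sig.
Qed.

Lemma cont_qf : continuous (fun v : 'rV[R]_#|V| => qf (fv v)).
Proof.
apply: cont_sum => x; apply: cont_mul; first exact: fv_cont.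
move=> v; apply: (@continuousD _ _ _ (fun v => \sum_(y | adj x y) fv v y) (fun v => pot x * fv v x)).
  by apply: cont_sum => y; exact: fv_cont.
by apply: cont_mul; [exact: cst_continuous | exact: fv_cont].
Qed.


Lemma homog (u : V -> R) mu : (forall z, dot z z = 1 -> dot z u = 0 -> qf z <= mu) ->
  forall z, dot z u = 0 -> qf z <= mu * dot z z.
Proof.
move=> h z zu; have [s0|sp] := eqVneq (dot z z) 0.
  have z0 := dot_eq0 s0.
  by rewrite s0 mulr0 /qf /dot big1 // => x _; rewrite z0 mul0r.
have s_gt : 0 < dot z z by rewrite lt_neqAle eq_sym sp dot_ge0.
set s := dot z z in sp s_gt *.
set k := (Num.sqrt s)^-1.
have k2 : k ^+ 2 = s^-1 by rewrite /k exprVn sqr_sqrtr // ltW.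
have := h (fun x => k * z x).
have eqH : qf (fun x => k * z x) = k ^+ 2 * qf z.
  rewrite /qf (_ : dot _ (H _) = dot (fun x => k * z x) (fun x => k * H z x)).
    by rewrite dotZl dotZr mulrA -expr2.
  by apply: eq_bigr => x _; rewrite HZ.
rewrite dotZl dotZr mulrA -expr2 k2 mulVf ?gt_eqF // dotZl zu mulr0 eqH.
move=> /(_ erefl erefl) hk.
have -> : qf z = s * (k ^+ 2 * qf z) by rewrite k2 mulrA mulfV ?gt_eqF // mul1r.
by rewrite mulrC ler_pM2r.
Qed.

End Main.


Lemma sqrt_half_le (R : realType) (a E : R) : 0 <= a -> 0 <= E -> 2^-1 <= (a + E) ^+ 2 ->
  Num.sqrt 2^-1 <= a + E.
Proof.
move=> a0 E0 h; rewrite -(@ger0_norm _ (a + E)); last by lra.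
by rewrite -sqrtr_sqr; apply: ler_wsqrtr.
Qed.

Lemma sqrt_first_le (R : realType) (m Q : R) : 0 <= m -> 0 < Q ->
  Num.sqrt (2^-1 - m / (2 * Q ^+ 2)) <= Num.sqrt 2^-1.
Proof.
move=> m0 Q0; apply: ler_wsqrtr; rewrite gerBl; apply: divr_ge0 => //.
by rewrite mulr_ge0 // sqr_ge0.
Qed.

Lemma num1 (R : realType) (Q m a r l : R) : 0 <= m -> 2 * m < Q -> Q <= l ->
  l ^+ 2 * r <= m ^+ 2 -> 0 <= r -> 2 * a ^+ 2 + r = 1 -> 0 <= a ->
  Num.sqrt (2^-1 - m / (2 * Q ^+ 2)) - Num.sqrt (m / (Q - m)) <= a.
Proof.
move=> m0 hQ hl hr r0 ha a0.
have Qp : 0 < Q by lra.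
have Qm : 0 < Q - m by lra.
set E := Num.sqrt (m / (Q - m)).
have E0 : 0 <= E by apply: sqrtr_ge0.
have E2 : E ^+ 2 * (Q - m) = m.
  by rewrite sqr_sqrtr; [rewrite divfK // gt_eqF | apply: divr_ge0; lra].
have rQ : r * Q ^+ 2 <= m ^+ 2.
  apply: le_trans hr; rewrite mulrC; apply: ler_wpM2r => //.
  rewrite ler_pXn2r // ?nnegrE; lra.
have rE : r <= 2 * E ^+ 2.
  have h1 : r * Q * Q <= m * Q by nra.
  have h2 : r * Q <= m by rewrite -(ler_pM2r Qp).
  have h3 : 0 <= (2 * E ^+ 2 - r) * (Q - m) by nra.
  by move: h3; rewrite pmulr_lge0 // subr_ge0.
rewrite lerBlDr; apply: le_trans (sqrt_first_le m0 Qp) _.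
apply: sqrt_half_le => //; nra.
Qed.

Lemma num2 (R : realType) (Q m a b c w r1 r2 l1 l2 : R) : 1 <= m -> 2 * m < Q ->
  Q <= l1 -> Q - 1 <= l2 -> l1 ^+ 2 * r1 <= m ^+ 2 -> l2 ^+ 2 * r2 <= m ^+ 2 ->
  0 <= r1 -> 0 <= r2 -> 2 * c ^+ 2 + r1 = 1 -> 0 < c ->
  a ^+ 2 + b ^+ 2 + r2 = 1 -> 0 <= a -> c * a + c * b + w = 0 -> w ^+ 2 <= r1 * r2 ->
  Num.sqrt (2^-1 - m / (2 * Q ^+ 2)) - Num.sqrt ((m + 1) / (Q - m - 1)) <= a.
Proof.
move=> m1 hQ hl1 hl2 hr1 hr2 r10 r20 hc c0 hab a0 hw hcs.
have Qp : 0 < Q by lra.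
have Qm : 0 < Q - m - 1 by lra.
set E := Num.sqrt ((m + 1) / (Q - m - 1)).
have E0 : 0 <= E by apply: sqrtr_ge0.
have E2 : E ^+ 2 * (Q - m - 1) = m + 1.
  by rewrite sqr_sqrtr; [rewrite divfK // gt_eqF | apply: divr_ge0; lra].
have r1Q : r1 * Q ^+ 2 <= m ^+ 2.
  apply: le_trans hr1; rewrite mulrC; apply: ler_wpM2r => //.
  rewrite ler_pXn2r // ?nnegrE; lra.
have r2Q : r2 * (Q - 1) ^+ 2 <= m ^+ 2.
  apply: le_trans hr2; rewrite mulrC; apply: ler_wpM2r => //.
  rewrite ler_pXn2r // ?nnegrE; lra.
have r14 : 4 * r1 <= 1 by nra.
have Q1 : 0 < Q - 1 by lra.
have h1 : r2 * (Q - 1) * (Q - 1) <= m * (Q - 1) by nra.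
have h2 : r2 * (Q - 1) <= m by rewrite -(ler_pM2r Q1).
have rE : r2 <= E ^+ 2.
  have h3 : 0 <= (E ^+ 2 - r2) * (Q - m - 1) by nra.
  by move: h3; rewrite pmulr_lge0 // subr_ge0.
set p := a + b.
have hp : c ^+ 2 * p ^+ 2 <= r1 * r2.
  have -> : c ^+ 2 * p ^+ 2 = w ^+ 2 by rewrite /p; nra.
  exact: hcs.
have hp2 : p ^+ 2 <= r2 by nra.
have pE : - E <= p by nra.
have ha : 2 * a ^+ 2 = 1 - r2 - p ^+ 2 + 2 * p * a by rewrite /p; nra.
have m0 : 0 <= m by lra.
rewrite lerBlDr; apply: le_trans (sqrt_first_le m0 Qp) _.
apply: sqrt_half_le => //; nra.
Qed.

End Helpers.
Import Helpers.


Lemma sumsq (R : realType) (V : finType) (f : V -> R) : \sum_x f x ^+ 2 = dot f f.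
Proof. by apply: eq_bigr => x _; rewrite expr2. Qed.

Lemma nz_of_dot1 (R : realType) (V : finType) (f : V -> R) : dot f f = 1 -> exists t, f t != 0.
Proof.
move=> h; have [t ht|hz] := pickP (fun t => f t != 0); first by exists t.
have : dot f f = 0.
  by rewrite /dot big1 // => x _; move: (hz x) => /= /negbFE /eqP ->; rewrite mul0r.
by rewrite h => /eqP; rewrite oner_eq0.
Qed.

Theorem theorem6 (R : realType) (V : finType) (adj : rel V) (sigma : V -> V)
  (v1 : V) (Q lambda1 lambda2 : R) (phi1 phi2 : V -> R) :
  simple_graph adj ->
  connected_graph adj ->
  graph_involution adj sigma ->
  sigma v1 != v1 ->
  2 * (max_degree adj)%:R < Q ->
  (* lambda1 > lambda2 are the two largest eigenvalues of H *)
  is_eigenvector adj sigma v1 Q lambda1 phi1 ->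
  is_eigenvector adj sigma v1 Q lambda2 phi2 ->
  lambda2 < lambda1 ->
  (forall mu, is_eigenvalue adj sigma v1 Q mu -> mu = lambda1 \/ mu <= lambda2) ->
  unit_norm phi1 -> unit_norm phi2 ->
  0 <= phi1 v1 -> 0 <= phi2 v1 ->
  let m : R := (max_degree adj)%:R in
  Num.sqrt (2^-1 - m / (2 * Q ^+ 2)) - Num.sqrt (m / (Q - m)) <= phi1 v1 /\
  Num.sqrt (2^-1 - m / (2 * Q ^+ 2)) - Num.sqrt ((m + 1) / (Q - m - 1))
    <= phi2 v1.
Proof.
move=> [adjS adjI] hconn [hinv hhom] hsv hQ [[x1 nz1] e1] [[x2 nz2] e2] l21 hev u1 u2 a1ge a2ge m.
have m0 : 0 <= m by rewrite /m ler0n.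
have Q0 : 0 <= Q by lra.
rewrite /unit_norm sumsq in u1; rewrite /unit_norm sumsq in u2.
have m1 : 1 <= m.
  move: (hconn v1 (sigma v1)) => /connectP [[|y p] pth hl]; first by rewrite /= hl eqxx in hsv.
  move: pth => /= /andP [a1y _].
  rewrite /m ler1n; apply: leq_trans (leq_bigmax v1).
  by rewrite /degree card_gt0; apply/set0Pn; exists y; rewrite inE.
set e := @ev R V v1.
have ee : dot e e = 1 by rewrite dot_ev /e /ev eqxx.
have [y1 [y1n [_ y1max]]] : exists y, \sum_x y x ^+2 = 1 /\ \sum_x y x * (fun _ : V => (0:R)) x = 0 /\
    forall z, \sum_x z x ^+ 2 = 1 -> \sum_x z x * (fun _ : V => (0:R)) x = 0 ->
      qf adj sigma v1 Q z <= qf adj sigma v1 Q y.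
  apply: exists_max; first exact: cont_qf.
  exists e; split; first by rewrite sumsq.
  by rewrite big1 // => x _; rewrite mulr0.
rewrite sumsq in y1n.
set mu := qf adj sigma v1 Q y1.
have dot0 : forall z : V -> R, dot z (fun _ => 0) = 0.
  by move=> z; rewrite /dot big1 // => x _; rewrite mulr0.
have qm1 : forall z, qf adj sigma v1 Q z <= mu * dot z z.
  move=> z; apply: (homog (u := fun _ => 0)); last exact: dot0.
  by move=> z' z'1 _; apply: y1max; rewrite ?sumsq //; apply: dot0.
have Hy1 : forall t, Hop adj sigma v1 Q y1 t = mu * y1 t.
  apply: (max_eig adjS (u := fun _ => 0) (lam := 0)).
  - by move=> t; rewrite /Hop big1 // mulr0 mul0r addr0.
  - exact: dot0.
  - by rewrite y1n mulr1.
  - by move=> z _; apply: qm1.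
have [t1 nzy1] := @nz_of_dot1 _ _ _ y1n.
have l1mu : lambda1 <= mu := rayleigh qm1 e1 nz1.
have mul1 : mu = lambda1.
  have [//|] := hev mu (ex_intro _ y1 (conj (ex_intro _ t1 nzy1) Hy1)).
  lra.
have Qmu : Q <= mu.
  have := qm1 e; rewrite ee mulr1 /e qf_ev //; by rewrite /potential eqxx.
rewrite mul1 in qm1 Qmu.
have [habs nozero] := maxvec adjS Q0 hconn qm1 e1 nz1.
have nz1v : phi1 v1 != 0 := nozero v1.
have a1p : 0 < phi1 v1 by rewrite lt_neqAle eq_sym nz1v a1ge.
have sgn : forall t, 0 <= phi1 t.
  move=> t; have := unique_vec adjS Q0 hconn qm1 e1 nz1v habs t.
  rewrite (ger0_norm a1ge) divff // mul1r => <-; exact: normr_ge0.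
have b1p : 0 < phi1 (sigma v1).
  by rewrite lt_neqAle eq_sym nozero sgn.
have hs : forall t, Hop adj sigma v1 Q (fun y => phi1 (sigma y)) t = lambda1 * phi1 (sigma t).
  by move=> t; rewrite H_sig // e1.
have := unique_vec adjS Q0 hconn qm1 e1 nz1v hs (sigma v1); rewrite hinv => hab.
have ab1 : phi1 (sigma v1) = phi1 v1.
  have h2 : phi1 v1 * phi1 v1 = phi1 (sigma v1) * phi1 (sigma v1).
    by rewrite {1}hab mulrAC divfK.
  nra.
set d := dvec R sigma v1.
have dv1 : d v1 = 1 by rewrite /d /dvec /ev eqxx eq_sym (negbTE hsv) /= ?mulr1n ?mulr0n; lra.
have dv2 : d (sigma v1) = -1 by rewrite /d /dvec /ev eqxx (negbTE hsv) /= ?mulr1n ?mulr0n; lra.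
have dd : dot d d = 2 by rewrite dot_dvec dv1 dv2; ring.
have dphi : dot d phi1 = 0 by rewrite dot_dvec ab1 subrr.
set k := (Num.sqrt 2)^-1 : R.
have k2 : k ^+ 2 = 2^-1 by rewrite /k exprVn sqr_sqrtr.
have [y2 [y2n [y2o y2max]]] : exists y, \sum_x y x ^+2 = 1 /\ \sum_x y x * phi1 x = 0 /\
    forall z, \sum_x z x ^+ 2 = 1 -> \sum_x z x * phi1 x = 0 ->
      qf adj sigma v1 Q z <= qf adj sigma v1 Q y.
  apply: exists_max; first exact: cont_qf.
  exists (fun x => k * d x); split.
    by rewrite sumsq dotZl dotZr mulrA -expr2 k2 dd mulVf.
  by rewrite (_ : \sum_x _ = dot (fun x => k * d x) phi1) // dotZl dphi mulr0.
rewrite sumsq in y2n.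
have y2o' : dot y2 phi1 = 0 by [].
set mu2 := qf adj sigma v1 Q y2.
have qm2 : forall z, dot z phi1 = 0 -> qf adj sigma v1 Q z <= mu2 * dot z z.
  apply: homog => z' z'1 z'o; apply: y2max; by rewrite ?sumsq.
have Hy2 : forall t, Hop adj sigma v1 Q y2 t = mu2 * y2 t.
  apply: (max_eig adjS (u := phi1) (lam := lambda1)) => //.
  by rewrite y2n mulr1.
have Qmu2 : Q - 1 <= mu2.
  have := qm2 d dphi; rewrite dd.
  have := qf_dvec Q adjS adjI hsv; rewrite -/d; lra.
have [t2 nzy2] := @nz_of_dot1 _ _ _ y2n.
have mu2l2 : mu2 <= lambda2.
  have [mueq|//] := hev mu2 (ex_intro _ y2 (conj (ex_intro _ t2 nzy2) Hy2)).
  rewrite mueq in Hy2.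
  have hy := unique_vec adjS Q0 hconn qm1 e1 nz1v Hy2.
  set c := y2 v1 / phi1 v1 in hy.
  have : dot y2 phi1 = c * dot phi1 phi1.
    by rewrite -dotZl; apply: eq_bigr => x _; rewrite hy.
  rewrite y2o' u1 mulr1 => c0.
  have : dot y2 y2 = 0.
    by rewrite /dot big1 // => x _; rewrite hy -c0 !mul0r.
  by rewrite y2n => /eqP; rewrite oner_eq0.
have Ql2 : Q - 1 <= lambda2 by lra.
have orth : dot phi1 phi2 = 0.
  have h := dot_sym sigma v1 Q adjS phi1 phi2.
  have h1 : dot phi1 (Hop adj sigma v1 Q phi2) = lambda2 * dot phi1 phi2.
    by rewrite -dotZr; apply: eq_bigr => x _; rewrite e2.
  have h2 : dot (Hop adj sigma v1 Q phi1) phi2 = lambda1 * dot phi1 phi2.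
    by rewrite -dotZl; apply: eq_bigr => x _; rewrite e1.
  rewrite h1 h2 in h.
  have : (lambda1 - lambda2) * dot phi1 phi2 = 0 by rewrite mulrBl h subrr.
  move/eqP; rewrite mulf_eq0 => /orP [|/eqP //].
  rewrite subr_eq0 => /eqP h3; lra.
have om1 := out_mass adjS e1; rewrite sumsq u1 mulr1 in om1.
have om2 := out_mass adjS e2; rewrite sumsq u2 mulr1 in om2.
have mdm : mdeg R adj = m by [].
rewrite mdm in om1 om2.
have s1 := split_sum hsv (fun x => phi1 x ^+ 2); rewrite sumsq u1 in s1.
have s2 := split_sum hsv (fun x => phi2 x ^+ 2); rewrite sumsq u2 in s2.
have s3 := split_sum hsv (fun x => phi1 x * phi2 x); rewrite (_ : \sum_x _ = dot phi1 phi2) // orth in s3.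
have cs := CS (fun x => ~~ inS sigma v1 x) phi1 phi2.
set r1 := \sum_(x | ~~ inS sigma v1 x) phi1 x ^+ 2 in om1 s1 cs.
set r2 := \sum_(x | ~~ inS sigma v1 x) phi2 x ^+ 2 in om2 s2 cs.
set w := \sum_(x | ~~ inS sigma v1 x) phi1 x * phi2 x in s3 cs.
have r10 : 0 <= r1 by apply: sumr_ge0 => x _; apply: sqr_ge0.
have r20 : 0 <= r2 by apply: sumr_ge0 => x _; apply: sqr_ge0.
rewrite ab1 in s1 s3.
have s1' : 2 * phi1 v1 ^+ 2 + r1 = 1 by rewrite [RHS]s1; ring.
split.
  exact: (num1 m0 hQ Qmu om1 r10 s1' a1ge).
exact: (num2 m1 hQ Qmu Ql2 om1 om2 r10 r20 s1' a1p (esym s2) a2ge (esym s3) cs).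
Qed.
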